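(* Let $\mathfrak{k}$ be a field, $n\ge2$, and ${\mathcal A}=(x_{i_1\ldots i_n})_{1\le i_j\le r_j}$ a box-shaped matrix of distinct indeterminates with polynomial ring $\mathfrak{k}[{\mathcal A}]$. Order the variables by $x_{i_1\ldots i_n}\le x_{j_1\ldots j_n}$ if and only if $(i_1,\dots,i_n)\le(j_1,\dots,j_n)$ in the lexicographic order on ${\mathbb N}^n$, and use the degree reverse lexicographic monomial order induced by this variable order. Then the set of all $2\times2$ minors of ${\mathcal A}$ is a Gröbner basis of $I_2({\mathcal A})$.
   Context: $\mathfrak{k}$ is algebraically closed of characteristic $0$. The $2\times2$ minors of a box-shaped matrix $(a_{i_1\ldots i_n})$ are $a_{i_1\ldots i_l\ldots i_n}a_{j_1\ldots j_l\ldots j_n}-a_{i_1\ldots i_{l-1}j_li_{l+1}\ldots i_n}a_{j_1\ldots j_{l-1}i_lj_{l+1}\ldots j_n}$ for any coordinate $l\in\{1,\dots,n\}$ and any two index points; $I_2({\mathcal A})$ is the ideal they generate. *)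

(* Defs.v *)
From HB Require Import structures.
From mathcomp Require Import all_boot all_order all_algebra.
From mathcomp Require Import multinomials.mpoly.
Set Implicit Arguments. Unset Strict Implicit. Unset Printing Implicit Defensive.
Import GRing.Theory.
Local Open Scope ring_scope.

(* Index points of an n-dimensional box with sides r 0, ..., r (n-1):
   tuples (i_1,...,i_n) with i_j in 'I_(r j) (0-based instead of 1-based). *)
Definition idx (n : nat) (r : 'I_n -> nat) : finType :=
  {dffun forall j : 'I_n, 'I_(r j)}.

Definition nvars (n : nat) (r : 'I_n -> nat) : nat := #|idx r|.

Definition polyA (K : fieldType) (n : nat) (r : 'I_n -> nat) :=
  {mpoly K[nvars r]}.

Definition xvar (K : fieldType) (n : nat) (r : 'I_n -> nat) (a : idx r)
  : polyA K r := 'X_(enum_rank a).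

Definition lexlt (n : nat) (r : 'I_n -> nat) (a b : idx r) : bool :=
  [exists l : 'I_n,
     [forall j : 'I_n, (j < l)%N ==> (val (a j) == val (b j))]
     && (val (a l) < val (b l))%N].

Definition varlt (n : nat) (r : 'I_n -> nat) (v w : 'I_(nvars r)) : bool :=
  lexlt (enum_val v) (enum_val w).

Definition drl_lt (n : nat) (r : 'I_n -> nat) (m m' : 'X_{1..nvars r}) : Prop :=
  (mdeg m < mdeg m')%N \/
  (mdeg m = mdeg m' /\
   exists v : 'I_(nvars r),
     (forall w, varlt w v -> m w = m' w) /\ (m' v < m v)%N).

Definition is_lead_mon (K : fieldType) (n : nat) (r : 'I_n -> nat)
  (p : polyA K r) (m : 'X_{1..nvars r}) : Prop :=
  m \in msupp p /\ forall m', m' \in msupp p -> m' = m \/ drl_lt m' m.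

Definition ideal_gen (K : fieldType) (n : nat) (r : 'I_n -> nat)
  (S : polyA K r -> Prop) (f : polyA K r) : Prop :=
  exists s : seq (polyA K r * polyA K r),
    (forall c g, (c, g) \in s -> S g) /\
    f = \sum_(cg <- s) cg.1 * cg.2.

Definition groebner_basis (K : fieldType) (n : nat) (r : 'I_n -> nat)
  (G I : polyA K r -> Prop) : Prop :=
  (forall g, G g -> I g) /\
  forall f, I f -> f != 0 ->
    exists g mg mf, [/\ G g, g != 0, is_lead_mon g mg, is_lead_mon f mf
                      & (mg <= mf)%MM].

Definition swapc (n : nat) (r : 'I_n -> nat) (l : 'I_n) (a b : idx r) : idx r :=
  [ffun j => if j == l then b j else a j].

Definition minor2 (K : fieldType) (n : nat) (r : 'I_n -> nat)
  (l : 'I_n) (a b : idx r) : polyA K r :=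
  xvar K a * xvar K b - xvar K (swapc l a b) * xvar K (swapc l b a).

Definition minors2 (K : fieldType) (n : nat) (r : 'I_n -> nat)
  (p : polyA K r) : Prop :=
  exists l a b, p = minor2 K l a b.

Definition I2 (K : fieldType) (n : nat) (r : 'I_n -> nat) : polyA K r -> Prop :=
  ideal_gen (@minors2 K n r).

(* Main.v *)
Require Import Defs.
From mathcomp Require Import all_boot all_order all_algebra.
From mathcomp Require Import multinomials.mpoly.
From mathcomp Require Import zify.
Set Implicit Arguments. Unset Strict Implicit. Unset Printing Implicit Defensive.
Import GRing.Theory.

Lemma seq_min (T : eqType) (lt : T -> T -> Prop) (s : seq T) :
  (forall x y z, x \in s -> y \in s -> z \in s -> lt x y -> lt y z -> lt x z) ->
  (forall x y, x \in s -> y \in s -> x <> y -> lt x y \/ lt y x) ->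
  s <> [::] -> exists2 x, x \in s & forall y, y \in s -> y = x \/ lt x y.
Proof.
elim: s => [//|a s IH] Htr Htot _.
case: s IH Htr Htot => [|b s] IH Htr Htot.
  exists a; first by rewrite mem_seq1.
  by move=> y; rewrite mem_seq1 => /eqP ->; left.
have [||//|x xin Hx] := IH.
- move=> x y z xi yi zi; apply: Htr; by rewrite inE ?xi ?yi ?zi orbT.
- move=> x y xi yi; apply: Htot; by rewrite inE ?xi ?yi orbT.
have ain : a \in [:: a, b & s] by rewrite inE eqxx.
have xin' : x \in [:: a, b & s] by rewrite inE xin orbT.
case: (eqVneq a x) => [e|ax]; first subst x.
  exists a => // y; rewrite inE => /orP[/eqP ->|/Hx]; [by left| by []].
have ax' : a <> x by move/eqP: ax.
have [ltax|ltxa] := Htot a x ain xin' ax'.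
  exists a => // y; rewrite inE => /orP[/eqP ->|yin]; first by left.
  right; have [->|] := Hx y yin; first by [].
  by apply: Htr; rewrite // inE yin orbT.
exists x => // y; rewrite inE => /orP[/eqP ->|yin]; first by right.
exact: Hx.
Qed.

Section Main.
Variables (K : fieldType) (n : nat) (r : 'I_n -> nat).
Local Notation T := (idx r).
Local Notation M := ('X_{1..nvars r}).

Lemma lexltP (a b : T) : reflect (exists l : 'I_n,
   (forall j : 'I_n, (j < l)%N -> val (a j) = val (b j)) /\ (val (a l) < val (b l))%N)
   (lexlt a b).
Proof.
apply: (iffP existsP) => [[l /andP[/forallP H1 H2]]|[l [H1 H2]]].
  by exists l; split => // j jl; apply/eqP; move: (H1 j); rewrite jl.
by exists l; rewrite H2 andbT; apply/forallP => j; apply/implyP => /H1 ->.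
Qed.

Lemma lex_irr (a : T) : ~~ lexlt a a.
Proof. by apply/lexltP => -[l [_]]; rewrite ltnn. Qed.

Lemma lex_trans (a b c : T) : lexlt a b -> lexlt b c -> lexlt a c.
Proof.
move=> /lexltP[l1 [H1 H1']] /lexltP[l2 [H2 H2']]; apply/lexltP.
case: (ltngtP l1 l2) => [lt12|lt21|eq12].
- exists l1; split; last by rewrite -(H2 _ lt12).
  by move=> j jl; rewrite H1 // H2 //; apply: ltn_trans lt12.
- exists l2; split; last by rewrite (H1 _ lt21).
  by move=> j jl; rewrite H1 ?H2 //; apply: ltn_trans lt21.
- have e : l1 = l2 by apply: val_inj.
  subst l2; exists l1; split; last exact: ltn_trans H2'.
  by move=> j jl; rewrite H1 ?H2.
Qed.

Lemma lex_total (a b : T) : a != b -> lexlt a b \/ lexlt b a.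
Proof.
move=> ab.
pose s := [seq j <- enum 'I_n | val (a j) != val (b j)].
have [|||l lin Hl] := @seq_min _ (fun x y : 'I_n => (x < y)%N) s.
- by move=> x y z _ _ _; apply: ltn_trans.
- move=> x y _ _ xy; case: (ltngtP x y) => [?|?|e]; [by left|by right|].
  by case: xy; apply: val_inj.
- move=> s0; move: ab; rewrite -[a == b]negbK negbK => /eqP ab; apply: ab.
  apply/ffunP => j; apply: val_inj; apply/eqP; apply: negbNE; apply/negP => H.
  have : j \in s by rewrite mem_filter H mem_enum.
  by rewrite s0.
have H : forall j : 'I_n, (j < l)%N -> val (a j) = val (b j).
  move=> j jl; apply/eqP; apply: negbNE; apply/negP => H.
  have /Hl[e|] : j \in s by rewrite mem_filter H mem_enum.
    by rewrite e ltnn in jl.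
  by move=> lj; move: (ltn_trans jl lj); rewrite ltnn.
move: lin; rewrite mem_filter => /andP[ne _].
case: (ltngtP (a l) (b l)) => [lt|gt|eq]; last by move/eqP: ne; case.
  by left; apply/lexltP; exists l.
by right; apply/lexltP; exists l; split => // j jl; rewrite H.
Qed.

Lemma varlt_irr (v : 'I_(nvars r)) : ~~ varlt v v.
Proof. exact: lex_irr. Qed.

Lemma varlt_trans (u v w : 'I_(nvars r)) : varlt u v -> varlt v w -> varlt u w.
Proof. exact: lex_trans. Qed.

Lemma varlt_total (v w : 'I_(nvars r)) : v != w -> varlt v w \/ varlt w v.
Proof.
move=> vw; apply: lex_total; apply: contra vw => /eqP e.
by apply/eqP; apply: enum_val_inj.
Qed.

Lemma drl_irr (m : M) : ~ drl_lt m m.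
Proof. by case=> [|[_ [v [_]]]]; rewrite ltnn. Qed.

Lemma drl_trans (m1 m2 m3 : M) : drl_lt m1 m2 -> drl_lt m2 m3 -> drl_lt m1 m3.
Proof.
case=> [d12|[d12 [v1 [E1 L1]]]] [d23|[d23 [v2 [E2 L2]]]].
- by left; apply: ltn_trans d23.
- by left; rewrite -d23.
- by left; rewrite d12.
right; split; first by rewrite d12.
case: (eqVneq v1 v2) => [e|ne].
  subst v2; exists v1; split; last exact: ltn_trans L1.
  by move=> w wv; rewrite E1 ?E2.
case: (varlt_total ne) => lt.
  exists v1; split; last by rewrite -(E2 _ lt).
  by move=> w wv; rewrite E1 ?E2 //; apply: varlt_trans lt.
exists v2; split; last by rewrite (E1 _ lt).
by move=> w wv; rewrite E1 ?E2 //; apply: varlt_trans lt.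
Qed.

Lemma drl_total (m1 m2 : M) : m1 <> m2 -> drl_lt m1 m2 \/ drl_lt m2 m1.
Proof.
move=> ne.
case: (ltngtP (mdeg m1) (mdeg m2)) => [lt|gt|eqd]; [by left; left|by right; left|].
pose s := [seq v <- enum 'I_(nvars r) | m1 v != m2 v].
have [|||v vin Hv] := @seq_min _ (fun x y => varlt x y) s.
- by move=> x y z _ _ _; apply: varlt_trans.
- by move=> x y _ _ xy; apply: varlt_total; apply/eqP.
- move=> s0; apply: ne; apply/mnmP => j; apply/eqP; apply: negbNE; apply/negP => H.
  have : j \in s by rewrite mem_filter H mem_enum.
  by rewrite s0.
have H : forall w, varlt w v -> m1 w = m2 w.
  move=> w wv; apply/eqP; apply: negbNE; apply/negP => H.
  have /Hv[e|] : w \in s by rewrite mem_filter H mem_enum.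
    by rewrite e (negbTE (varlt_irr v)) in wv.
  by move=> vw; move: (varlt_trans wv vw); rewrite (negbTE (varlt_irr w)).
move: vin; rewrite mem_filter => /andP[nev _].
case: (ltngtP (m1 v) (m2 v)) => [lt|gt|eq]; last by rewrite eq eqxx in nev.
  by right; right; split => //; exists v; split => // w /H ->.
by left; right; split => //; exists v.
Qed.

Lemma drl_addl (u m1 m2 : M) : drl_lt m1 m2 -> drl_lt (u + m1)%MM (u + m2)%MM.
Proof.
rewrite /drl_lt !mdegD ltn_add2l.
case=> [d|[d [v [E L]]]]; [by left|right; split; first by rewrite d].
exists v; split; last by rewrite !mnmDE ltn_add2l.
by move=> w wv; rewrite !mnmDE E.
Qed.


Definition e (c : T) : M := U_(enum_rank c)%MM.
Definition cle (a b : T) : bool := [forall j, (a j <= b j)%N].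
Definition cnt (m : M) (j : 'I_n) (v : 'I_(r j)) : nat :=
  \sum_(c : T | c j == v) m (enum_rank c).
Arguments cnt : clear implicits.

Lemma e_apply c (w : 'I_(nvars r)) : e c w = (c == enum_val w) :> nat.
Proof.
rewrite /e mnm1E; case: eqP => [<-|ne]; first by rewrite enum_rankK eqxx.
case: eqP => // E; case: ne; by rewrite E enum_valK.
Qed.

Lemma cnt_e c j v : cnt (e c) j v = (c j == v).
Proof.
rewrite /cnt; under eq_bigr => c' _ do rewrite e_apply enum_rankK.
case: (boolP (c j == v)) => H.
  rewrite (bigD1 c) //= eqxx big1 // => c' /andP[_ ne].
  by rewrite eq_sym (negbTE ne).
rewrite big1 // => c' cv; case: eqP => // E; by rewrite E cv in H.
Qed.

Lemma cntD m1 m2 j v : cnt (m1 + m2)%MM j v = (cnt m1 j v + cnt m2 j v)%N.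
Proof. by rewrite /cnt -big_split; apply: eq_bigr => c _; rewrite mnmDE. Qed.

Lemma cnt_swap l a b j v :
  cnt (e (swapc l a b) + e (swapc l b a))%MM j v = cnt (e a + e b)%MM j v.
Proof.
rewrite !cntD !cnt_e /swapc !ffunE.
by case: (j == l); rewrite // addnC.
Qed.

Lemma mdeg_e2 a b : mdeg (e a + e b)%MM = 2.
Proof. by rewrite mdegD !mdeg1. Qed.

Lemma le_pair (m : M) a b : a != b -> (0 < m (enum_rank a))%N -> (0 < m (enum_rank b))%N ->
  (e a + e b <= m)%MM.
Proof.
move=> ab Ha Hb; apply/mnm_lepP => i; rewrite mnmDE !e_apply.
case: (eqVneq a (enum_val i)) => [ea|na]; case: (eqVneq b (enum_val i)) => [eb|nb] /=.
- by rewrite ea eb eqxx in ab.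
- by move: Ha; rewrite ea enum_valK.
- by move: Hb; rewrite eb enum_valK.
- by [].
Qed.

Lemma ord_neq (j l : 'I_n) : (j < l)%N -> (j == l) = false.
Proof. by move=> jl; apply/negbTE; apply: contraTneq jl => ->; rewrite ltnn. Qed.

Lemma SwapLex (a b : T) : lexlt a b -> ~~ cle a b ->
  exists l, drl_lt (e (swapc l a b) + e (swapc l b a))%MM (e a + e b)%MM.
Proof.
move=> /lexltP[p [Hp1 Hp2]] /forallPn [l]; rewrite -ltnNge => Hl.
have pl : (p < l)%N.
  case: (ltngtP p l) => // [lp|epl].
    by move: (Hp1 l lp) Hl => ->; rewrite ltnn.
  have E : p = l by apply: val_inj.
  by move: Hp2; rewrite E => /(ltn_trans Hl); rewrite ltnn.
exists l.
set a' := swapc l a b; set b' := swapc l b a.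
have a'E j : a' j = if j == l then b j else a j by rewrite ffunE.
have b'E j : b' j = if j == l then a j else b j by rewrite ffunE.
have pl' : (p == l) = false by apply: ord_neq.
have L1 : lexlt a' a.
  apply/lexltP; exists l; split; last by rewrite a'E eqxx.
  by move=> j jl; rewrite a'E ord_neq.
have L2 : lexlt a' b.
  apply/lexltP; exists p; split; last by rewrite a'E pl'.
  by move=> j jp; rewrite a'E ord_neq ?Hp1 //; apply: ltn_trans pl.
have L3 : lexlt a' b'.
  apply/lexltP; exists p; split; last by rewrite a'E b'E pl'.
  by move=> j jp; rewrite a'E b'E ord_neq ?Hp1 //; apply: ltn_trans pl.
have NE : forall c c' : T, lexlt c c' -> (c' == c) = false.
  move=> c c' H; case: eqP => // E; move: H; rewrite E.
  by rewrite (negbTE (lex_irr c)).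
right; split; first by rewrite !mdeg_e2.
exists (enum_rank a'); split.
  move=> w; rewrite /varlt enum_rankK => Hw.
  rewrite !mnmDE !e_apply (NE _ _ Hw) (NE _ _ (lex_trans Hw L1)).
  by rewrite (NE _ _ (lex_trans Hw L2)) (NE _ _ (lex_trans Hw L3)).
by rewrite !mnmDE !e_apply enum_rankK eqxx (NE _ _ L1) (NE _ _ L2).
Qed.


Local Open Scope ring_scope.

Lemma minor_eq l a b : minor2 K l a b =
  'X_[e a + e b] - 'X_[e (swapc l a b) + e (swapc l b a)].
Proof. by rewrite /minor2 /xvar !mpolyXD. Qed.

Lemma minor_lead l a b :
  drl_lt (e (swapc l a b) + e (swapc l b a))%MM (e a + e b)%MM ->
  minor2 K l a b != 0 /\ is_lead_mon (minor2 K l a b) (e a + e b)%MM.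
Proof.
move=> H; rewrite minor_eq.
set U := (e a + e b)%MM; set U' := (e _ + e _)%MM in H *.
have UU : (U' == U) = false.
  by apply/negbTE; apply/eqP => E; rewrite E in H; apply: (drl_irr H).
have cU : ('X_[U] - 'X_[U'] : polyA K r)@_U = 1.
  by rewrite mcoeffB !mcoeffX eqxx UU subr0.
have nz : ('X_[U] - 'X_[U'] : polyA K r) != 0.
  by apply/eqP => E; move: cU; rewrite E mcoeff0 => /eqP; rewrite eq_sym oner_eq0.
split => //; split; first by rewrite mcoeff_msupp cU oner_eq0.
move=> m'; rewrite mcoeff_msupp mcoeffB !mcoeffX.
case: (eqVneq U m') => [->|_]; first by left.
case: (eqVneq U' m') => [<-|_]; first by right.
by rewrite subrr eqxx.
Qed.

Definition fib (m0 m : M) : bool := (mdeg m == mdeg m0) &&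
  [forall j : 'I_n, [forall v : 'I_(r j), cnt m j v == cnt m0 j v]].

Definition Lf (m0 : M) (f : polyA K r) : K :=
  \sum_(m : bmultinom (nvars r) (mdeg m0).+1 | fib m0 m) f@_m.

Lemma LfD m0 f g : Lf m0 (f + g) = Lf m0 f + Lf m0 g.
Proof. by rewrite /Lf -big_split; apply: eq_bigr => m _; rewrite mcoeffD. Qed.

Lemma LfB m0 f g : Lf m0 (f - g) = Lf m0 f - Lf m0 g.
Proof. by rewrite /Lf -sumrB; apply: eq_bigr => m _; rewrite mcoeffB. Qed.

Lemma LfZ m0 c f : Lf m0 (c *: f) = c * Lf m0 f.
Proof. by rewrite /Lf mulr_sumr; apply: eq_bigr => m _; rewrite mcoeffZ. Qed.

Lemma Lf0 m0 : Lf m0 0 = 0.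
Proof. by rewrite /Lf big1 // => m _; rewrite mcoeff0. Qed.

Lemma Lf_sum m0 (I : Type) (s : seq I) (F : I -> polyA K r) :
  Lf m0 (\sum_(i <- s) F i) = \sum_(i <- s) Lf m0 (F i).
Proof.
elim: s => [|i s IH]; first by rewrite !big_nil Lf0.
by rewrite !big_cons LfD IH.
Qed.

Lemma LfX m0 w : Lf m0 'X_[w] = (fib m0 w)%:R.
Proof.
rewrite /Lf; case: (boolP (fib m0 w)) => H.
  have Hb : (mdeg w < (mdeg m0).+1)%N.
    by case/andP: H => /eqP ->.
  rewrite (bigD1 (BMultinom Hb)) //= mcoeffX eqxx big1 ?addr0 // => m /andP[_ ne].
  rewrite mcoeffX; case: eqP => // E; case/eqP: ne; apply: val_inj => /=.
  by rewrite E.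
rewrite big1 // => m Hm; rewrite mcoeffX; case: eqP => // E.
by rewrite E Hm in H.
Qed.

Lemma fib_shift m0 m U U' : mdeg U = mdeg U' ->
  (forall j v, cnt U j v = cnt U' j v) ->
  fib m0 (m + U)%MM = fib m0 (m + U')%MM.
Proof.
move=> dU cU; rewrite /fib !mdegD dU; congr (_ && _).
apply: eq_forallb => j; apply: eq_forallb => v; by rewrite !cntD cU.
Qed.

Lemma Lf_binom m0 c U U' : mdeg U = mdeg U' ->
  (forall j v, cnt U j v = cnt U' j v) ->
  Lf m0 (c * ('X_[U] - 'X_[U'])) = 0.
Proof.
move=> dU cU; rewrite {1}(mpolyE c) mulr_suml Lf_sum big1 // => m _.
rewrite -scalerAl mulrBr -!mpolyXD LfZ LfB !LfX.
by rewrite (fib_shift m0 m dU cU) subrr mulr0.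
Qed.

Lemma Lf_I m0 f : @I2 K n r f -> Lf m0 f = 0.
Proof.
case=> s [Hs ->]; rewrite Lf_sum big_seq big1 // => [[c g]] /= Hin.
have [l [a [b ->]]] := Hs _ _ Hin.
rewrite minor_eq; apply: Lf_binom; first by rewrite !mdeg_e2.
by move=> j v; rewrite cnt_swap.
Qed.


Definition sortedb (m : M) : bool := [forall a : T, [forall b : T,
  ((0 < m (enum_rank a)) && (0 < m (enum_rank b)))%N ==> (cle a b || cle b a)]].

Lemma cle_refl a : cle a a.
Proof. by apply/forallP => j. Qed.

Lemma cle_trans a b c : cle a b -> cle b c -> cle a c.
Proof.
move=> /forallP H1 /forallP H2; apply/forallP => j; exact: leq_trans (H1 j) (H2 j).
Qed.

Lemma cle_anti a b : cle a b -> cle b a -> a = b.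
Proof.
move=> /forallP H1 /forallP H2; apply/ffunP => j; apply: val_inj.
by apply/eqP; rewrite eqn_leq H1 H2.
Qed.

Lemma supp_min (m : M) : sortedb m -> (0 < mdeg m)%N -> exists a,
  (0 < m (enum_rank a))%N /\ forall b, (0 < m (enum_rank b))%N -> cle a b.
Proof.
move=> sm dm.
pose s := [seq c <- enum T | (0 < m (enum_rank c))%N].
have [|||a ain Ha] := @seq_min _ (fun x y => x != y /\ cle x y) s.
- move=> x y z _ _ _ [xy cxy] [yz cyz]; split; last exact: cle_trans cxy cyz.
  apply/eqP => E; subst z; move: xy; by rewrite (cle_anti cxy cyz) eqxx.
- move=> x y; rewrite !mem_filter => /andP[px _] /andP[py _] xy.
  move/forallP: sm => /(_ x)/forallP/(_ y); rewrite px py /= => /orP[H|H].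
    by left; split => //; apply/eqP.
  by right; split => //; apply/eqP => E; apply: xy.
- move=> s0; move: dm; rewrite mdegE.
  case: (pickP (fun i => (0 < m i)%N)) => [i Hi|none].
    have : enum_val i \in s by rewrite mem_filter enum_valK Hi mem_enum.
    by rewrite s0.
  rewrite big1 // => i _; by move: (none i); rewrite lt0n => /negbFE/eqP.
exists a; split; first by move: ain; rewrite mem_filter => /andP[].
move=> b pb; have : b \in s by rewrite mem_filter pb mem_enum.
by move/Ha => [->|[]]; rewrite ?cle_refl.
Qed.

Lemma sortedb_sub (m u : M) : sortedb m -> sortedb (m - u)%MM.
Proof.
move=> /forallP sm; apply/forallP => a; apply/forallP => b.
apply/implyP => /andP[Ha Hb]; move/forallP: (sm a) => /(_ b)/implyP; apply.
rewrite !mnmBE in Ha Hb; apply/andP; split; lia.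
Qed.

Lemma cnt_pos_ex (m : M) j v : (0 < cnt m j v)%N ->
  exists c : T, c j = v /\ (0 < m (enum_rank c))%N.
Proof.
case: (pickP (fun c : T => (c j == v) && (0 < m (enum_rank c))%N)) =>
  [c /andP[/eqP cj pc]|none]; first by exists c.
rewrite /cnt big1 // => c cj; move: (none c); rewrite cj /= lt0n.
by move/negbFE/eqP.
Qed.

Lemma cnt_pos (m : M) c j : (0 < m (enum_rank c))%N -> (0 < cnt m j (c j))%N.
Proof. by move=> H; rewrite /cnt (bigD1 c) //= ltn_addr. Qed.

Lemma min_le (m : M) a j v : (forall b, (0 < m (enum_rank b))%N -> cle a b) ->
  (0 < cnt m j v)%N -> (a j <= v)%N.
Proof.
move=> Ha /cnt_pos_ex [c [cj pc]]; rewrite -cj.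
by move/forallP: (Ha c pc) => /(_ j).
Qed.

Lemma uniq_sorted d : forall m m' : M, mdeg m = d -> mdeg m' = d ->
  sortedb m -> sortedb m' -> (forall j v, cnt m j v = cnt m' j v) -> m = m'.
Proof.
elim: d => [|d IH] m m' dm dm' sm sm' cm.
  have /eqP -> : m == 0%MM by rewrite -mdeg_eq0 dm.
  by have /eqP -> : m' == 0%MM by rewrite -mdeg_eq0 dm'.
have dm0 : (0 < mdeg m)%N by rewrite dm.
have dm0' : (0 < mdeg m')%N by rewrite dm'.
have [a [pa Ha]] := supp_min sm dm0.
have [a' [pa' Ha']] := supp_min sm' dm0'.
have aa : a = a'.
  apply/ffunP => j; apply: val_inj; apply/eqP; rewrite eqn_leq; apply/andP; split.
    by apply: (min_le Ha); rewrite cm; apply: cnt_pos.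
  by apply: (min_le Ha'); rewrite -cm; apply: cnt_pos.
subst a'.
have le1 : (e a <= m)%MM by rewrite /e lep1mP -lt0n.
have le2 : (e a <= m')%MM by rewrite /e lep1mP -lt0n.
rewrite -(submK le1) -(submK le2); congr (_ + _)%MM.
have dsub : forall x : M, (e a <= x)%MM -> mdeg x = d.+1 -> mdeg (x - e a)%MM = d.
  move=> x lex dx; have := mdegD (x - e a)%MM (e a).
  by rewrite submK // /e mdeg1 dx addn1 => -[].
apply: IH; [exact: dsub|exact: dsub|exact: sortedb_sub|exact: sortedb_sub|].
move=> j v; apply/eqP; rewrite -(eqn_add2r (cnt (e a) j v)) -!cntD !submK //.
by rewrite cm.
Qed.

Lemma not_sorted (m : M) : ~~ sortedb m -> exists a0 b0 l,
  [/\ (e a0 + e b0 <= m)%MM & 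
      drl_lt (e (swapc l a0 b0) + e (swapc l b0 a0))%MM (e a0 + e b0)%MM].
Proof.
move/forallPn => [a /forallPn [b]]; rewrite negb_imply => /andP[/andP[Ha Hb] nc].
move: nc; rewrite negb_or => /andP[nab nba].
have ab : a != b by apply: contraNneq nab => ->; apply: cle_refl.
have Hle := le_pair ab Ha Hb.
case: (lex_total ab) => lt.
  by have [l H] := SwapLex lt nab; exists a, b, l.
have [l H] := SwapLex lt nba; exists b, a, l; split => //.
by rewrite addmC.
Qed.

Lemma fibP m0 x : fib m0 x -> mdeg x = mdeg m0 /\ forall j v, cnt x j v = cnt m0 j v.
Proof.
case/andP => /eqP -> /forallP H; split => // j v.
by move/forallP: (H j) => /(_ v)/eqP.
Qed.

Lemma fibI m0 x : mdeg x = mdeg m0 -> (forall j v, cnt x j v = cnt m0 j v) -> fib m0 x.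
Proof.
move=> d c; rewrite /fib d eqxx /=; apply/forallP => j; apply/forallP => v.
by rewrite c.
Qed.

Lemma Min m0 m : sortedb m0 -> fib m0 m -> m <> m0 -> drl_lt m0 m.
Proof.
move=> s0 fm ne.
pose s := map (@bmnm _ _) (filter (fun x : bmultinom (nvars r) (mdeg m0).+1 => fib m0 x) (enum {: bmultinom (nvars r) (mdeg m0).+1})).
have mem_s w : (w \in s) = fib m0 w.
  apply/idP/idP.
    by case/mapP => x; rewrite mem_filter => /andP[Hx _] ->.
  move=> H; have Hb : (mdeg w < (mdeg m0).+1)%N by have [-> _] := fibP H.
  by apply/mapP; exists (BMultinom Hb) => //; rewrite mem_filter H mem_enum.
have [|||mu muin Hmu] := @seq_min _ (@drl_lt n r) s.
- by move=> x y z _ _ _; apply: drl_trans.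
- by move=> x y _ _; apply: drl_total.
- move=> E; have : m0 \in s by rewrite mem_s fibI.
  by rewrite E.
have [dmu cmu] : mdeg mu = mdeg m0 /\ forall j v, cnt mu j v = cnt m0 j v.
  by apply: fibP; rewrite -mem_s.
have smu : sortedb mu.
  apply/negPn/negP => /not_sorted [a0 [b0 [l [Hle Hd]]]].
  set U := (e a0 + e b0)%MM in Hle Hd; set U' := (e _ + e _)%MM in Hd.
  set mu' := ((mu - U) + U')%MM.
  have Hlt : drl_lt mu' mu.
    by rewrite -[X in drl_lt _ X](submK Hle) addmC [X in drl_lt _ X]addmC; apply: drl_addl.
  have : mu' \in s.
    rewrite mem_s; apply: fibI.
      rewrite -dmu /mu' -[X in _ = mdeg X](submK Hle) !mdegD.
      by rewrite /e !mdeg1.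
    move=> j v; rewrite -cmu /mu' -[in RHS](submK Hle) [in LHS]cntD [in RHS]cntD cnt_swap.
    done.
  move/Hmu => [E|H]; first by rewrite E in Hlt; apply: (drl_irr Hlt).
  by apply: (drl_irr (drl_trans H Hlt)).
have E : mu = m0 by apply: (uniq_sorted dmu).
subst mu.
have : m \in s by rewrite mem_s.
by move/Hmu => [E|//].
Qed.

Lemma Lf_lead m0 (f : polyA K r) : sortedb m0 -> is_lead_mon f m0 -> Lf m0 f = f@_m0.
Proof.
move=> s0 [min Hm].
have H0 : fib m0 m0 by apply: fibI.
rewrite /Lf (bigD1 (BMultinom (ltnSn (mdeg m0)))) //= big1 ?addr0 // => m /andP[Hf ne].
case: (eqVneq (f@_m) 0) => // nz.
have ne' : bmnm m <> m0.
  by move=> E; case/eqP: ne; apply: val_inj.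
have : bmnm m \in msupp f by rewrite mcoeff_msupp.
move/Hm => [//|lt].
by case: (drl_irr (drl_trans lt (Min s0 Hf ne'))).
Qed.

End Main.

Theorem theorem1p11 (K : fieldType) (n : nat) (r : 'I_n -> nat) :
  (2 <= n)%N -> groebner_basis (@minors2 K n r) (@I2 K n r).
Proof.
move=> _; split.
  move=> g Hg; exists [:: (1%R, g)]; split.
    by move=> c g'; rewrite mem_seq1 => /eqP [_ ->].
  by rewrite big_cons big_nil /= mul1r addr0.
move=> f If fnz.
have [|||mf mfin Hmf] := @seq_min _ (fun x y => @drl_lt n r y x) (msupp f).
- by move=> x y z _ _ _ H1 H2; apply: drl_trans H2 H1.
- by move=> x y _ _ xy; case: (drl_total xy) => H; [right|left].
- move=> E; move: fnz; by rewrite (mpolyE f) E big_nil eqxx.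
have lead : is_lead_mon f mf by split.
case: (boolP (sortedb mf)) => smf.
  have := Lf_I mf If; rewrite (Lf_lead smf lead) => E.
  by move: mfin; rewrite mcoeff_msupp E eqxx.
have [a0 [b0 [l [Hle Hd]]]] := not_sorted smf.
have [nz leadg] := minor_lead K Hd.
exists (minor2 K l a0 b0), (e a0 + e b0)%MM, mf; split => //.
by exists l, a0, b0.
Qed.
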